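(* Let $G$ be a finite simple graph with edge weight function $w$, and let $w_1(u)=0$ for all $u\in V(G)$. If the maximum degree $\Delta$ of $G$ is greater than $1$, then all roots of $\eta_{(w,w_1)}(G,x)$ lie in the interval $[-2b_0\sqrt{\Delta-1},\,2b_0\sqrt{\Delta-1}]$, where $b_0=\max_{e\in E(G)}|w(e)|$.
   Context: An edge weight function $w$ assigns a nonzero complex number to each edge; induced subgraphs carry restricted weights. For $A\subseteq E(G)$, $w(A)=\prod_{e\in A}w(e)$. $\mu_w(G,x)=\sum_{M}(-1)^{|M|}|w(M)|^2x^{n-2|M|}$ over all matchings $M$ (including empty), $n=|V(G)|$. $\eta_{(w,w_1)}(G,x)=\sum_{S\subseteq V(G)}(-1)^{|V(G)\setminus S|}\big(\prod_{v\in V(G)\setminus S}w_1(v)\big)\mu_w(G[S],x)$ with $G[S]$ the induced subgraph and $\mu_w$ of the empty graph equal to $1$. *)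

(* Defs.v *)
From mathcomp Require Import all_boot all_order all_algebra.
From mathcomp Require Export complex.
From mathcomp Require Export reals.
Set Implicit Arguments. Unset Strict Implicit. Unset Printing Implicit Defensive.
Import Order.TTheory GRing.Theory Num.Theory.
Local Open Scope ring_scope.

(* A finite simple graph on vertex type T is a symmetric irreflexive
   relation e : rel T.  Edges are 2-element vertex sets. *)
Definition edges (T : finType) (e : rel T) : {set {set T}} :=
  [set f : {set T} | [exists x, exists y, e x y && (f == [set x; y])]].

Definition edges_in (T : finType) (e : rel T) (S : {set T}) : {set {set T}} :=
  [set f in edges e | f \subset S].

Definition matching_in (T : finType) (e : rel T) (S : {set T})
  (M : {set {set T}}) : bool :=
  (M \subset edges_in e S) && trivIset M.

Definition deg (T : finType) (e : rel T) (v : T) : nat := #|[set u | e v u]|.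

Definition maxdeg (T : finType) (e : rel T) : nat := \max_(v : T) deg e v.

Definition mu_w (R : rcfType) (T : finType) (e : rel T) (w : {set T} -> R[i])
  (S : {set T}) : {poly R[i]} :=
  \sum_(M : {set {set T}} | matching_in e S M)
     ((-1) ^+ #|M| * `|\prod_(f in M) w f| ^+ 2) *: 'X^(#|S| - 2 * #|M|).

Definition eta_w (R : rcfType) (T : finType) (e : rel T) (w : {set T} -> R[i])
  (w1 : T -> R[i]) : {poly R[i]} :=
  \sum_(S : {set T})
     ((-1) ^+ #|~: S| * \prod_(v in ~: S) w1 v) *: mu_w e w S.

Definition b0 (R : rcfType) (T : finType) (e : rel T) (w : {set T} -> R[i]) : R :=
  \big[Num.max/0]_(f in edges e) Normc.normc (w f).

(* Main.v *)
Require Import Defs.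
From mathcomp Require Import all_boot all_order all_algebra complex reals.
From mathcomp Require Import ring lra.
Set Implicit Arguments. Unset Strict Implicit. Unset Printing Implicit Defensive.
Import Order.TTheory GRing.Theory Num.Theory.
Local Open Scope ring_scope.
Local Open Scope complex_scope.
Section Comb.
Variables (R : rcfType) (T : finType) (e : rel T).
Hypotheses (e_sym : symmetric e) (e_irr : irreflexive e).
Variable (w : {set T} -> R[i]).

Lemma edgesP f : reflect (exists x y, e x y /\ f = [set x; y]) (f \in edges e).
Proof.
rewrite inE; apply: (iffP existsP) => [[x /existsP[y /andP[exy /eqP ->]]]|[x [y [exy ->]]]].
  by exists x, y.
by exists x; apply/existsP; exists y; rewrite exy eqxx.
Qed.

Lemma edge_card f : f \in edges e -> #|f| = 2%N.
Proof.
case/edgesP=> x [y [exy ->]]; rewrite cards2.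
by case: eqP exy => // ->; rewrite e_irr.
Qed.

Lemma matching_cover S M : matching_in e S M -> cover M \subset S.
Proof.
case/andP=> /subsetP sM _; apply/subsetP => x /bigcupP[f fM xf].
by move: (sM f fM); rewrite inE => /andP[_ /subsetP]; apply.
Qed.

Lemma matching_card S M : matching_in e S M -> (2 * #|M| <= #|S|)%N.
Proof.
move=> mM; have := subset_leq_card (matching_cover mM).
case/andP: mM => /subsetP sM /eqP <-.
rewrite (eq_bigr (fun _ => 2%N)) ?sum_nat_const 1?mulnC //.
by move=> f /sM; rewrite inE => /andP[/edge_card].
Qed.


Lemma in_edges_in (S f : {set T}) : (f \in edges_in e S) = (f \in edges e) && (f \subset S).
Proof. by rewrite /edges_in in_set. Qed.

Lemma pred_uncovered (S : {set T}) (v : T) (M : {set {set T}}) : v \in S ->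
  (matching_in e S M && (v \notin cover M)) = matching_in e (S :\ v) M.
Proof.
move=> vS; rewrite /matching_in; apply/idP/idP.
  case/andP => /andP[/subsetP sM tM] vM; rewrite tM andbT.
  apply/subsetP => f fM; have:= sM f fM; rewrite !in_edges_in => /andP[ef fS].
  rewrite ef /=; apply/subsetP=> x xf; rewrite !inE (subsetP fS) // andbT.
  by apply: contraNneq vM => <-; apply/bigcupP; exists f.
case/andP=> /subsetP sM tM; rewrite tM andbT; apply/andP; split.
  apply/subsetP => f fM; have := sM f fM; rewrite !in_edges_in => /andP[-> fS].
  by apply: subset_trans fS (subsetDl _ _).
apply/bigcupP => -[f fM vf]; have := sM f fM; rewrite in_edges_in.
by case/andP=> _ /subsetP /(_ v vf); rewrite !inE eqxx.
Qed.


Lemma partner (S : {set T}) v M : matching_in e S M -> v \in cover M ->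
  exists u0, forall u, ((u \in S) && e v u && ([set v; u] \in M)) = (u == u0).
Proof.
case/andP=> /subsetP sM /trivIsetP tM /bigcupP[f fM vf].
have := sM f fM; rewrite in_edges_in => /andP[ef fS].
have [u0 [evu0 fE]] : exists u0, e v u0 /\ f = [set v; u0].
  case/edgesP: ef vf => x [y [exy ->]] /set2P[->|->]; first by exists y.
  by exists x; rewrite e_sym setUC.
exists u0 => u; apply/idP/eqP.
  case/andP=> /andP[uS evu] fuM.
  have eqf : [set v; u] = f.
    apply/eqP; apply: contraT => neq; have := tM _ _ fuM fM neq.
    by move/disjointFr => /(_ v); rewrite vf !inE eqxx => /(_ isT).
  have : u \in f by rewrite -eqf !inE eqxx orbT.
  rewrite fE => /set2P[uv|//]; by move: evu; rewrite uv e_irr.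
move=> ->; rewrite evu0 -fE fM andbT (subsetP fS) //.
by rewrite fE !inE eqxx orbT.
Qed.

Definition term (S : {set T}) (M : {set {set T}}) : {poly R[i]} :=
  ((-1) ^+ #|M| * `|\prod_(f in M) w f| ^+ 2) *: 'X^(#|S| - 2 * #|M|).

Lemma covered_reindex (S : {set T}) v u : v \in S -> u \in S -> e v u ->
  \sum_(M | matching_in e S M && (v \in cover M) && ([set v; u] \in M)) term S M =
  - (`|w [set v; u]| ^+ 2 *: mu_w e w (S :\ v :\ u)).
Proof.
move=> vS uS evu.
have uv : u != v by apply: contraTneq evu => ->; rewrite e_irr.
set f := [set v; u]; set S' := S :\ v :\ u.
have fE : f \in edges e by apply/edgesP; exists v, u.
have nfS' : forall x, x \in f -> x \in S' = false.
  by move=> x /set2P[]->; rewrite !inE ?eqxx ?andbF.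
rewrite /mu_w scaler_sumr -sumrN.
rewrite (reindex_onto (fun M' => f |: M') (fun M => M :\ f)) /=; last first.
  by move=> M /andP[_ fM]; rewrite setD1K.
have nfM' : forall M', matching_in e S' M' -> f \notin M'.
  move=> M' /andP[/subsetP sM _]; apply/negP => /sM; rewrite in_edges_in.
  case/andP=> _ /subsetP /(_ v); rewrite nfS' ?inE ?eqxx //.
  by move=> /(_ isT).
have Hp : forall M', (matching_in e S (f |: M') && (v \in cover (f |: M')) &&
   (f \in f |: M') && ((f |: M') :\ f == M')) = matching_in e S' M'.
  move=> M'.
  apply/idP/idP.
    case/andP=> /andP[/andP[/andP[/subsetP sM tM] _] _] /eqP eqM'.
    have fM' : f \notin M' by rewrite -eqM' !inE eqxx.
    have sub' : M' \subset f |: M' by apply: subsetUr.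
    rewrite /matching_in (trivIsetS sub' tM) andbT.
    apply/subsetP => g gM'; have gM : g \in f |: M' by rewrite inE gM' orbT.
    have := sM g gM; rewrite !in_edges_in => /andP[-> gS] /=.
    have gf : f != g by apply: contraNneq fM' => ->.
    have dfg := trivIsetP tM _ _ (setU11 _ _) gM gf.
    apply/subsetP => x xg; rewrite !inE (subsetP gS) // andbT.
    apply/andP; split; apply/eqP => xE; move: (disjointFl dfg xg);
      by rewrite xE !inE eqxx ?orbT.
  move=> mM'; have fM' := nfM' _ mM'.
  rewrite setU1K // eqxx setU11 !andbT; apply/andP; split; last first.
    by apply/bigcupP; exists f; rewrite ?setU11 // !inE eqxx.
  case/andP: mM' => /subsetP sM tM; apply/andP; split.
    apply/subsetP => g /setU1P[->|gM'].
      by rewrite in_edges_in fE subUset !sub1set vS uS.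
    have := sM g gM'; rewrite !in_edges_in => /andP[-> /subset_trans]; apply.
    by apply/subsetP => x; rewrite !inE => /and3P[].
  apply: trivIsetU; rewrite ?trivIset1 //.
  rewrite cover1 -setI_eq0; apply/eqP/setP => x; rewrite !inE.
  apply/negbTE; apply/negP => /andP[xf /bigcupP[g gM' xg]].
  have := sM g gM'; rewrite in_edges_in => /andP[_ /subsetP] /(_ x xg).
  by rewrite nfS' // /f !inE.
rewrite (eq_bigl _ _ Hp); apply: eq_bigr => M' mM'; have fM' := nfM' _ mM'.
have cS : #|S| = (#|S'|).+2.
  by rewrite (cardsD1 v S) vS (cardsD1 u (S :\ v)) !inE uv uS.
have hc := matching_card mM'.
rewrite /term cardsU1 fM' big_setU1 //= normrM exprMn cS.
rewrite scalerA -scaleNr; congr (_ *: _); last first.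
  by congr ('X^_); rewrite mulnS subSS.
by rewrite add1n exprS mulN1r mulNr mulrCA.
Qed.

Lemma mu_rec (S : {set T}) v : v \in S ->
  mu_w e w S = 'X * mu_w e w (S :\ v) -
    \sum_(u in S | e v u) (`|w [set v; u]| ^+ 2 *: mu_w e w (S :\ v :\ u)).
Proof.
move=> vS.
rewrite {1}/mu_w (bigID (fun M => v \in cover M)) /= addrC; congr (_ + _).
  rewrite /mu_w mulr_sumr; apply: eq_big => M; first exact: pred_uncovered.
  move=> mM; rewrite pred_uncovered // in mM.
  have hc' := matching_card mM.
  rewrite -scalerAr -exprS; congr (_ *: 'X^_).
  by rewrite (cardsD1 v S) vS add1n subSn.
rewrite (eq_bigr (fun M : {set {set T}} => \sum_(u | (u \in S) && e v u && ([set v; u] \in M)) term S M)); last first.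
  move=> M /andP[mM vM]; have [u0 Hu0] := partner mM vM.
  by rewrite (big_pred1 u0).
rewrite (exchange_big_dep (fun u => (u \in S) && e v u)) /=; last by move=> M u _ /andP[].
rewrite -sumrN; apply: eq_bigr => u /andP[uS evu].
rewrite -covered_reindex //; apply: eq_bigl => M.
by rewrite uS evu.
Qed.

Lemma mu0 : mu_w e w set0 = 1.
Proof.
rewrite /mu_w (big_pred1 set0); last first.
  move=> M; rewrite /= /matching_in; apply/idP/eqP.
    case/andP=> /subsetP sM _; apply/setP => f; rewrite inE.
    apply/negbTE/negP => /sM; rewrite in_edges_in => /andP[/edge_card].
    by rewrite subset0 => + /eqP fE; rewrite fE cards0.
  move=> ->; rewrite sub0set /=; apply/trivIsetP => A B; by rewrite inE.
by rewrite !cards0 big_set0 normr1 expr1n mulr1 expr0 scale1r.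
Qed.

End Comb.
Section An. Variable R : rcfType.
Local Notation Imc := (@complex.Im R).
Local Notation Rec := (@complex.Re R).
Lemma Im_inv (r : R[i]) : Imc r^-1 = - Imc r / (Rec r ^+ 2 + Imc r ^+ 2).
Proof. case: r => a b /=. by rewrite mulNr. Qed.
Lemma ImRM (x : R) (y : R[i]) : Imc (x%:C * y) = x * Imc y.
Proof. case: y => a b /=. by rewrite mul0r addr0. Qed.
Lemma ReRM (x : R) (y : R[i]) : Rec (x%:C * y) = x * Rec y.
Proof. case: y => a b /=. by rewrite mul0r subr0. Qed.

Lemma Im_inv_le (y : R) (r : R[i]) : 0 <= y * Imc r -> y * Imc r^-1 <= 0.
Proof.
move=> h; rewrite Im_inv mulrA mulrN mulNr oppr_le0 divr_ge0 //.
by rewrite addr_ge0 ?sqr_ge0.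
Qed.

Variables (T : finType) (e : rel T).
Hypothesis e_irr : irreflexive e.

Lemma nonreal_nonzero (F : {set T} -> R[i]) (z : R[i]) (lam : T -> T -> R)
  (hlam : forall v u, 0 <= lam v u) (F0 : F set0 = 1)
  (Frec : forall (S : {set T}) v, v \in S -> F S = z * F (S :\ v) -
      \sum_(u in S | e v u) (lam v u)%:C * F (S :\ v :\ u))
  (hz : Imc z != 0) :
  forall S, F S != 0 /\
    forall v, v \in S -> Imc z ^+ 2 <= Imc z * Imc (F S / F (S :\ v)).
Proof.
move=> S; have [n] := ubnP #|S|; elim: n S => // n IH S hS.
have ratio : forall v, v \in S -> F (S :\ v) != 0 /\
    Imc z ^+ 2 <= Imc z * Imc (F S / F (S :\ v)).
  move=> v vS; set S1 := S :\ v.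
  have hS1 : (#|S1| < n)%N.
    by move: hS; rewrite (cardsD1 v S) vS.
  have [F1 IH1] := IH S1 hS1.
  split => //.
  have -> : F S / F S1 = z - \sum_(u in S | e v u) (lam v u)%:C * (F S1 / F (S1 :\ u))^-1.
    rewrite (Frec _ _ vS) mulrBl mulfK // mulr_suml; congr (_ - _); apply: eq_bigr => u _.
    have [->|Fu] := eqVneq (F (S1 :\ u)) 0; first by rewrite !(invr0, mulr0, mul0r).
    by rewrite invf_div mulrA.
  rewrite raddfB raddf_sum /= mulrBr exprS mulrC -[X in X <= _]subr0.
  rewrite mulrC lerD2l oppr0 oppr_ge0 mulr_sumr; apply: sumr_le0 => u /andP[uS evu].
  have uS1 : u \in S1 by rewrite !inE uS andbT; apply: contraTneq evu => ->; rewrite e_irr.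
  rewrite ImRM mulrCA; apply: mulr_ge0_le0; first exact: hlam.
  apply: Im_inv_le; apply: le_trans (IH1 _ uS1); exact: sqr_ge0.
case: (set_0Vmem S) => [->|[v vS]].
  by rewrite F0 oner_eq0; split => // v; rewrite inE.
split; last by move=> u /ratio[].
have [Fv hv] := ratio v vS.
have : Imc (F S / F (S :\ v)) != 0.
  by apply: contraTneq hv => ->; rewrite mulr0 -ltNge exprn_even_gt0.
by apply: contra => /eqP ->; rewrite mul0r raddf0.
Qed.

Hypothesis e_sym : symmetric e.

Lemma real_pos (G : {set T} -> R) (y b c : R) (D : nat) (lam : T -> T -> R)
  (hlam : forall v u, e v u -> 0 <= lam v u <= b ^+ 2)
  (hdeg : forall (S : {set T}) v, (#|[set u in S | e v u]| <= D)%N)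
  (hD : (2 <= D)%N) (hc : 0 < c) (hc2 : c ^+ 2 = (D%:R - 1) * b ^+ 2)
  (hy : 2 * c < y) (G0 : G set0 = 1)
  (Grec : forall (S : {set T}) v, v \in S -> G S = y * G (S :\ v) -
      \sum_(u in S | e v u) lam v u * G (S :\ v :\ u)) :
  forall S, 0 < G S /\ forall v, v \in S ->
    (#|[set u in S | e v u]| <= D.-1)%N -> c * G (S :\ v) <= G S.
Proof.
move=> S; have [n] := ubnP #|S|; elim: n S => // n IH S hS.
have key : forall v, v \in S -> 0 < G (S :\ v) /\
    (c * y - #|[set u in S | e v u]|%:R * b ^+ 2) * G (S :\ v) <= c * G S.
  move=> v vS; set S1 := S :\ v.
  have hS1 : (#|S1| < n)%N by move: hS; rewrite (cardsD1 v S) vS.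
  have [G1 IH1] := IH S1 hS1.
  split => //.
  have bound : c * (\sum_(u in S | e v u) lam v u * G (S :\ v :\ u)) <=
      #|[set u in S | e v u]|%:R * b ^+ 2 * G S1.
    rewrite mulr_sumr -mulrA mulr_natl -sumr_const.
    rewrite [X in _ <= X](eq_bigl (fun u => (u \in S) && e v u)); last by move=> u; rewrite inE.
    apply: ler_sum => u /andP[uS evu].
    have uv : u != v by apply: contraTneq evu => ->; rewrite e_irr.
    have uS1 : u \in S1 by rewrite !inE uS andbT.
    have degu : (#|[set t in S1 | e u t]| <= D.-1)%N.
      have := hdeg S u; rewrite (cardsD1 v [set t in S | e u t]) inE vS e_sym evu /= add1n.
      have -> : [set t in S | e u t] :\ v = [set t in S1 | e u t].
        by apply/setP => t; rewrite !inE andbA.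
      by move=> h; rewrite -ltnS (ltn_predK hD).
    have hS2 : (#|S1 :\ u| < n)%N.
      by apply: leq_ltn_trans hS1; rewrite (cardsD1 u S1) uS1.
    have [G2 _] := IH _ hS2.
    have := IH1 u uS1 degu; have [l0 lb] := andP (hlam _ _ evu).
    rewrite mulrCA => h.
    apply: le_trans (ler_wpM2l l0 h) _.
    by rewrite ler_wpM2r // ltW.
  rewrite (Grec _ _ vS) mulrBr mulrA lerBrDr.
  move: bound; rewrite -/S1; lra.
case: (set_0Vmem S) => [->|[v vS]].
  by rewrite G0 ltr01; split => // v; rewrite inE.
split.
  have [G1 h] := key v vS.
  have hk : #|[set u in S | e v u]|%:R * b ^+ 2 <= D%:R * b ^+ 2.
    by rewrite ler_wpM2r ?sqr_ge0 // ler_nat.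
  have hD' : 2%:R <= D%:R :> R by rewrite ler_nat.
  have hb : 0 <= b ^+ 2 by apply: sqr_ge0.
  have : 0 < c * G S.
    apply: lt_le_trans h; apply: mulr_gt0 => //. nra.
  by rewrite pmulr_rgt0.
move=> u uS hdu; have [G1 h] := key u uS.
have hk : #|[set t in S | e u t]|%:R * b ^+ 2 <= (D%:R - 1) * b ^+ 2.
  rewrite ler_wpM2r ?sqr_ge0 // -(natrB _ (ltnW hD)) subn1 ler_nat //.
rewrite -hc2 in hk.
have h2 : c * (c * G (S :\ u)) <= c * G S.
  apply: le_trans h; rewrite mulrA -expr2.
  have : c ^+ 2 <= c * y - #|[set t in S | e u t]|%:R * b ^+ 2.
    have : c ^+ 2 + c ^+ 2 <= c * y by rewrite -mulr2n -mulr_natl mulrA; nra.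
    lra.
  by move=> hh; rewrite ler_wpM2r // ltW.
by rewrite ler_pM2l in h2.
Qed.

End An.

Lemma eta_mu (R : rcfType) (T : finType) (e : rel T) (w : {set T} -> R[i])
  (w1 : T -> R[i]) (w1_0 : forall u, w1 u = 0) :
  eta_w e w w1 = mu_w e w setT.
Proof.
rewrite /eta_w (bigD1 setT) //= setCT cards0 ?big_set0 expr0 mulr1 scale1r.
rewrite big1 ?addr0 //.
move=> S nS; case: (set_0Vmem (~: S)) => [h|[x xS]].
  by move: nS; rewrite -(setCK S) h setC0 eqxx.
by rewrite (bigD1 x) //= w1_0 mul0r mulr0 scale0r.
Qed.

Lemma normc_sqr (R : rcfType) (x : R[i]) : `|x| ^+ 2 = ((Normc.normc x) ^+ 2)%:C.
Proof. by rewrite rmorphXn. Qed.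

Lemma mu_horner_rec (R : rcfType) (T : finType) (e : rel T)
  (e_sym : symmetric e) (e_irr : irreflexive e) (w : {set T} -> R[i])
  (z : R[i]) (S : {set T}) v : v \in S ->
  (mu_w e w S).[z] = z * (mu_w e w (S :\ v)).[z] -
     \sum_(u in S | e v u) ((Normc.normc (w [set v; u])) ^+ 2)%:C *
        (mu_w e w (S :\ v :\ u)).[z].
Proof.
move=> vS; rewrite (mu_rec e_sym e_irr w vS) hornerD hornerN hornerM hornerX.
by congr (_ - _); rewrite horner_sum; apply: eq_bigr => u _; rewrite hornerZ normc_sqr.
Qed.

Theorem corollary3p5 (R : realType) (T : finType) (e : rel T)
  (e_sym : symmetric e) (e_irr : irreflexive e)
  (w : {set T} -> R[i]) (w_nz : forall f, f \in edges e -> w f != 0)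
  (w1 : T -> R[i]) (w1_0 : forall u, w1 u = 0)
  (hD : (1 < maxdeg e)%N) :
  forall z : R[i], root (eta_w e w w1) z ->
    exists r : R, z = (r%:C)%C /\
      - (2 * b0 e w * Num.sqrt ((maxdeg e)%:R - 1)) <= r /\
      r <= 2 * b0 e w * Num.sqrt ((maxdeg e)%:R - 1).
Proof.
move=> z; rewrite eta_mu // rootE => /eqP hz.
set lam := fun v u => (Normc.normc (w [set v; u])) ^+ 2.
have lam0 : forall v u, 0 <= lam v u by move=> v u; apply: sqr_ge0.
have F0 : forall x, (mu_w e w set0).[x] = 1 by move=> x; rewrite mu0 // hornerC.
have Imz : complex.Im z = 0.
  apply/eqP; apply: contraT => hIm.
  have [+ _] := nonreal_nonzero e_irr lam0 (F0 z)
      (fun S v vS => mu_horner_rec e_sym e_irr w z vS) hIm setT.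
  by rewrite hz eqxx.
have zE : z = (complex.Re z)%:C by case: z Imz {hz} => a b /= ->.
set r := complex.Re z; exists r; split => //.
rewrite zE in hz.
set D := maxdeg e in hD *; set b := b0 e w; set s := Num.sqrt (D%:R - 1).
have hs : 0 < s by rewrite sqrtr_gt0 subr_gt0 ltr1n.
have nge0 : forall x : R[i], 0 <= Normc.normc x by case=> a b'; apply: sqrtr_ge0.
have nleb : forall f, f \in edges e -> Normc.normc (w f) <= b.
  by move=> f fE; rewrite /b /b0; exact: le_bigmax_cond.
have lamb : forall v u, e v u -> 0 <= lam v u <= b ^+ 2.
  move=> v u evu; rewrite lam0 /= /lam !expr2; apply: ler_pM => //.
    by apply: nleb; apply/edgesP; exists v, u.
  by apply: nleb; apply/edgesP; exists v, u.
have hb : 0 < b.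
  have [v hv] : exists v, (0 < deg e v)%N.
    apply/existsP; apply: contraTT hD; rewrite negb_exists => /forallP h.
    rewrite -leqNgt; apply: (@leq_trans 0) => //; apply/bigmax_leqP => v _.
    by move: (h v); rewrite -leqNgt.
  move: hv; rewrite /deg card_gt0 => /set0Pn[u]; rewrite inE => evu.
  have fE : [set v; u] \in edges e by apply/edgesP; exists v, u.
  apply: lt_le_trans (nleb _ fE); rewrite lt_def nge0 andbT.
  by apply/eqP => /Normc.eq0_normc /eqP; apply/negP; apply: w_nz.
have hc : 0 < b * s by apply: mulr_gt0.
have hc2 : (b * s) ^+ 2 = (D%:R - 1) * b ^+ 2.
  rewrite exprMn sqr_sqrtr; first by rewrite mulrC.
  by rewrite subr_ge0 ler1n ltnW.
have hdeg : forall (S : {set T}) v, (#|[set u in S | e v u]| <= D)%N.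
  move=> S v; apply: (@leq_trans (deg e v)); last exact: leq_bigmax.
  by apply: subset_leq_card; apply/subsetP => u; rewrite !inE => /andP[].
set G := fun S => complex.Re (mu_w e w S).[r%:C].
have G0 : G set0 = 1 by rewrite /G F0.
have Grec : forall (S : {set T}) v, v \in S -> G S = r * G (S :\ v) -
      \sum_(u in S | e v u) lam v u * G (S :\ v :\ u).
  move=> S v vS; rewrite /G (mu_horner_rec e_sym e_irr w _ vS) raddfB /= ReRM.
  by rewrite raddf_sum; congr (_ - _); apply: eq_bigr => u _; rewrite /= ReRM.
have GT : G setT = 0 by rewrite /G hz.
have hD2 : (2 <= D)%N by [].
split; last first.
  rewrite leNgt; apply/negP => hr.
  have [] := real_pos e_irr e_sym lamb hdeg hD2 hc hc2 _ G0 Grec setT.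
    by rewrite mulrA.
  by rewrite GT ltxx.
rewrite leNgt; apply/negP => hr.
set N := fun S : {set T} => (-1) ^+ #|S| * G S.
have N0 : N set0 = 1 by rewrite /N cards0 expr0 mul1r G0.
have Nrec : forall (S : {set T}) v, v \in S -> N S = - r * N (S :\ v) -
      \sum_(u in S | e v u) lam v u * N (S :\ v :\ u).
  move=> S v vS; rewrite /N (Grec _ _ vS) mulrBr.
  have cS : #|S| = (#|S :\ v|).+1 by rewrite (cardsD1 v S) vS.
  congr (_ - _); first by rewrite cS exprS; ring.
  rewrite mulr_sumr; apply: eq_bigr => u /andP[uS evu].
  have uv : u != v by apply: contraTneq evu => ->; rewrite e_irr.
  have cS2 : #|S| = (#|S :\ v :\ u|).+2.
    by rewrite cS (cardsD1 u (S :\ v)) !inE uv uS.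
  by rewrite cS2 !exprS; ring.
have [] := real_pos e_irr e_sym lamb hdeg hD2 hc hc2 _ N0 Nrec setT.
  by rewrite mulrA; lra.
by rewrite /N GT mulr0 ltxx.
Qed.
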